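(* Let $\Lambda$ be a finite simple graph with vertex set $\{v_1,\dots,v_n\}$, $n\ge 3$, and let $\Gamma'=\Gamma'(\Lambda)$ be the graph constructed as follows. The vertex set of $\Gamma'$ is $\{v_1,\dots,v_n\}\cup\{a_1,a_2,a_3,b_1,b_2,b_3,c_1,\dots,c_n,d_1,d_2,d_3\}$ (all new vertices distinct). The edges of $\Gamma'$ are: all edges of $\Lambda$; $\{c_j,v_j\}$ and $\{c_j,v_{j+1}\}$ for $1\le j\le n$, where $v_{n+1}:=v_1$; $\{d_i,c_j\}$ for all $i\in\{1,2,3\}$ and $1\le j\le n$; $\{d_1,v_1\}$, $\{d_1,b_1\}$; $\{d_2,v_2\}$; $\{d_3,v_k\}$ for $3\le k\le n$, and $\{d_3,b_3\}$; $\{d_2,d_3\}$; $\{v_k,b_i\}$ for all $1\le k\le n$ and $i\in\{1,2,3\}$; $\{b_1,a_1\}$, $\{b_2,a_2\}$, $\{b_3,a_3\}$; and $\{a_1,a_2\}$, $\{a_1,a_3\}$, $\{a_2,a_3\}$. There are no other edges. Then the only graph automorphism of $\Gamma'$ is the identity.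
   Context: All graphs are finite, undirected, without loops or multiple edges. A graph automorphism is a bijection of the vertex set preserving adjacency and non-adjacency. *)

(* Defs.v *)
From HB Require Import structures.
From mathcomp Require Import all_boot.
Set Implicit Arguments. Unset Strict Implicit. Unset Printing Implicit Defensive.

(* Vertices of Gamma'(Lambda), 0-based indices:
   GV i  = v_{i+1}  (i : 'I_n),   GC j = c_{j+1} (j : 'I_n),
   GA i  = a_{i+1}, GB i = b_{i+1}, GD i = d_{i+1}  (i : 'I_3). *)
Inductive gvert (n : nat) : Type :=
| GV of 'I_n | GA of 'I_3 | GB of 'I_3 | GC of 'I_n | GD of 'I_3.
Arguments GV {n}. Arguments GA {n}. Arguments GB {n}. Arguments GC {n}. Arguments GD {n}.

Definition gvert_enc n (x : gvert n) : 'I_n + 'I_3 + 'I_3 + 'I_n + 'I_3 :=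
  match x with
  | GV i => inl (inl (inl (inl i)))
  | GA i => inl (inl (inl (inr i)))
  | GB i => inl (inl (inr i))
  | GC i => inl (inr i)
  | GD i => inr i
  end.
Definition gvert_dec n (s : 'I_n + 'I_3 + 'I_3 + 'I_n + 'I_3) : gvert n :=
  match s with
  | inl (inl (inl (inl i))) => GV i
  | inl (inl (inl (inr i))) => GA i
  | inl (inl (inr i)) => GB i
  | inl (inr i) => GC i
  | inr i => GD i
  end.
Lemma gvert_encK n : cancel (@gvert_enc n) (@gvert_dec n).
Proof. by case. Qed.
HB.instance Definition _ n := Finite.copy (gvert n) (can_type (@gvert_encK n)).

(* Directed "generating" edges of Gamma'; [gadj] is their symmetrization.
   [e] is the edge relation of Lambda on {v_1..v_n}. *)
Definition gadj0 n (e : rel 'I_n) (x y : gvert n) : bool :=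
  match x, y with
  | GV i, GV j => e i j
  | GC j, GV k => (val k == val j) || (val k == (val j).+1 %% n)
                                        (* c_j v_j, c_j v_{j+1}, v_{n+1}=v_1 *)
  | GD _, GC _ => true
  | GD i, GV k => [|| (val i == 0) && (val k == 0),
                      (val i == 1) && (val k == 1)
                    | (val i == 2) && (2 <= val k)]       (* d_3 v_k, k>=3 *)
  | GD i, GB j => ((val i == 0) && (val j == 0))
                  || ((val i == 2) && (val j == 2))
  | GD i, GD j => (val i == 1) && (val j == 2)
  | GV _, GB _ => true
  | GB i, GA j => i == j
  | GA i, GA j => val i < val j                           (* triangle a1a2a3 *)
  | _, _ => false
  end.

Definition gadj n (e : rel 'I_n) : rel (gvert n) :=
  fun x y => gadj0 e x y || gadj0 e y x.

Definition is_graph_aut (T : finType) (r : rel T) (f : T -> T) : Prop :=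
  bijective f /\ forall x y, r (f x) (f y) = r x y.

(* Main.v *)
Require Import Defs.
From mathcomp Require Import all_boot zify.
Set Implicit Arguments. Unset Strict Implicit. Unset Printing Implicit Defensive.

Section Main.
Variable m : nat.
Local Notation n := m.+3.
Variable e : rel 'I_n.
Local Notation adj := (gadj e).

Definition i0 : 'I_3 := @Ordinal 3 0 isT.
Definition i1 : 'I_3 := @Ordinal 3 1 isT.
Definition i2 : 'I_3 := @Ordinal 3 2 isT.
Definition n0 : 'I_n := @Ordinal n 0 isT.
Definition n1 : 'I_n := @Ordinal n 1 isT.
Definition n2 : 'I_n := @Ordinal n 2 isT.

Lemma ord3P (P : 'I_3 -> Prop) : P i0 -> P i1 -> P i2 -> forall i, P i.
Proof.
move=> H0 H1 H2 [[|[|[|k]]] Hk] //.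
- by have -> : Ordinal Hk = i0 by apply: val_inj.
- by have -> : Ordinal Hk = i1 by apply: val_inj.
- by have -> : Ordinal Hk = i2 by apply: val_inj.
Qed.

Lemma gveqE (x y : gvert n) : (x == y) = match x, y with
  | GV i, GV j => i == j | GA i, GA j => i == j | GB i, GB j => i == j
  | GC i, GC j => i == j | GD i, GD j => i == j | _, _ => false end.
Proof.
case: x => i; case: y => j /=; try (by apply/eqP/eqP => [[]|->]); by apply/negbTE/eqP.
Qed.

Definition deg (x : gvert n) := #|[set y | adj x y]|.

Lemma deg_le x (s : seq (gvert n)) : (forall y, adj x y -> y \in s) -> deg x <= size s.
Proof.
move=> H; apply: leq_trans (card_size s); apply: subset_leq_card.
by apply/subsetP => y; rewrite inE; exact: H.
Qed.

Lemma deg_ge x (s : seq (gvert n)) : uniq s -> all (adj x) s -> size s <= deg x.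
Proof.
move=> Us /allP As; rewrite -(card_uniqP Us); apply: subset_leq_card.
by apply/subsetP => y /As; rewrite inE.
Qed.

Lemma isA_class x : (deg x <= 3) = (if x is GA _ then true else false).
Proof.
case: x => i /=.
- apply/negbTE; rewrite -ltnNge.
  apply: (deg_ge (s := [:: GB i0; GB i1; GB i2; GC i])).
    by [].
  by rewrite /= /gadj /= eqxx.
- move: i; apply: ord3P.
  + apply: (deg_le (s := [:: GB i0; GA i1; GA i2])).
    move=> [] j; rewrite /gadj /= //; move: j; apply: ord3P => //.
  + apply: (deg_le (s := [:: GB i1; GA i0; GA i2])).
    move=> [] j; rewrite /gadj /= //; move: j; apply: ord3P => //.
  + apply: (deg_le (s := [:: GB i2; GA i0; GA i1])).
    move=> [] j; rewrite /gadj /= //; move: j; apply: ord3P => //.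
- apply/negbTE; rewrite -ltnNge.
  apply: (deg_ge (s := [:: GV n0; GV n1; GV n2; GA i])).
    by [].
  by rewrite /= /gadj /= eqxx.
- apply/negbTE; rewrite -ltnNge.
  apply: (deg_ge (s := [:: GD i0; GD i1; GD i2; GV i])).
    by [].
  by rewrite /= /gadj /= eqxx.
- apply/negbTE; rewrite -ltnNge.
  move: i; apply: ord3P.
  + apply: (deg_ge (s := [:: GC n0; GC n1; GC n2; GV n0])); first by [].
    by rewrite /= /gadj /=.
  + apply: (deg_ge (s := [:: GC n0; GC n1; GC n2; GV n1])); first by [].
    by rewrite /= /gadj /=.
  + apply: (deg_ge (s := [:: GC n0; GC n1; GC n2; GD i1])); first by [].
    by rewrite /= /gadj /=.
Qed.

Definition isA x := deg x <= 3.
Definition isB x := ~~ isA x && [exists y, isA y && adj x y].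
Definition isV x := [forall y, isB y ==> adj x y].
Definition isCD x := ~~ isA x && ~~ isB x && ~~ isV x.
Definition isD13 x := isCD x && [exists y, isB y && adj x y].
Definition isC x := isCD x && ~~ isD13 x && [forall y, isD13 y ==> adj x y].
Definition isD2 x := isCD x && ~~ isD13 x && ~~ isC x.

Lemma isAE x : isA x = (if x is GA _ then true else false).
Proof. exact: isA_class. Qed.

Lemma isBE x : isB x = (if x is GB _ then true else false).
Proof.
rewrite /isB isAE; case: x => i //=.
- by apply/negbTE/existsP => -[[] j]; rewrite isAE.
- by apply/existsP; exists (GA i); rewrite isAE /gadj /= eqxx.
- by apply/negbTE/existsP => -[[] j]; rewrite isAE.
- by apply/negbTE/existsP => -[[] j]; rewrite isAE.
Qed.

Lemma isVE x : isV x = (if x is GV _ then true else false).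
Proof.
rewrite /isV; case: x => i.
- by apply/forallP => -[] j; rewrite isBE.
- apply/negbTE/forallP => H; move: i H; apply: ord3P => H.
  + by move: (H (GB i1)); rewrite isBE.
  + by move: (H (GB i0)); rewrite isBE.
  + by move: (H (GB i0)); rewrite isBE.
- by apply/negbTE/forallP => H; move: (H (GB i)); rewrite isBE /gadj /=.
- by apply/negbTE/forallP => H; move: (H (GB i0)); rewrite isBE /gadj /=.
- by apply/negbTE/forallP => H; move: (H (GB i1)); rewrite isBE /gadj /= orbF => /orP [] /andP [].
Qed.

Lemma isCDE x : isCD x = (match x with GC _ | GD _ => true | _ => false end).
Proof. by rewrite /isCD isAE isBE isVE; case: x. Qed.

Lemma isD13E x : isD13 x = (if x is GD i then val i != 1 else false).
Proof.
rewrite /isD13 isCDE; case: x => i //=.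
- by apply/negbTE/existsP => -[[] j]; rewrite isBE.
- move: i; apply: ord3P.
  + by apply/existsP; exists (GB i0); rewrite isBE.
  + by apply/negbTE/existsP => -[[] j]; rewrite isBE //= /gadj /=.
  + by apply/existsP; exists (GB i2); rewrite isBE.
Qed.

Lemma isCE x : isC x = (if x is GC _ then true else false).
Proof.
rewrite /isC isD13E isCDE; case: x => i //=.
- by apply/forallP => -[] j; rewrite isD13E /= ?/gadj /= ?implybT.
  move: i; apply: ord3P => //=.
  by apply/negbTE/forallP => H; move: (H (GD i0)); rewrite isD13E /gadj /=.
Qed.

Lemma isD2E x : isD2 x = (if x is GD i then val i == 1 else false).
Proof.
rewrite /isD2 isCE isD13E isCDE; case: x => i //=.
by rewrite negbK andbT.
Qed.

Variables (f g : gvert n -> gvert n).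
Hypotheses (fK : cancel f g) (gK : cancel g f).
Hypothesis Hadj : forall x y, adj (f x) (f y) = adj x y.

Lemma finj : injective f. Proof. exact: can_inj fK. Qed.

Lemma ex_inv (P Q : gvert n -> bool) : (forall y, P (f y) = Q y) ->
  [exists y, P y] = [exists y, Q y].
Proof.
move=> H; apply/existsP/existsP => -[y Hy].
  by exists (g y); rewrite -H gK.
by exists (f y); rewrite H.
Qed.

Lemma fa_inv (P Q : gvert n -> bool) : (forall y, P (f y) = Q y) ->
  [forall y, P y] = [forall y, Q y].
Proof.
move=> H; apply/forallP/forallP => Hy y.
  by rewrite -H.
by rewrite -(gK y) H.
Qed.

Lemma deg_f x : deg (f x) = deg x.
Proof.
rewrite /deg -(card_preimset [set y | adj (f x) y] finj).
by apply: eq_card => y; rewrite !inE Hadj.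
Qed.

Lemma isA_f x : isA (f x) = isA x.
Proof. by rewrite /isA deg_f. Qed.
Lemma isB_f x : isB (f x) = isB x.
Proof. by rewrite /isB isA_f; congr (_ && _); apply: ex_inv => y; rewrite isA_f Hadj. Qed.
Lemma isV_f x : isV (f x) = isV x.
Proof. by rewrite /isV; apply: fa_inv => y; rewrite isB_f Hadj. Qed.
Lemma isCD_f x : isCD (f x) = isCD x.
Proof. by rewrite /isCD isA_f isB_f isV_f. Qed.
Lemma isD13_f x : isD13 (f x) = isD13 x.
Proof. by rewrite /isD13 isCD_f; congr (_ && _); apply: ex_inv => y; rewrite isB_f Hadj. Qed.
Lemma isC_f x : isC (f x) = isC x.
Proof. by rewrite /isC isCD_f isD13_f; congr (_ && _); apply: fa_inv => y; rewrite isD13_f Hadj. Qed.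
Lemma isD2_f x : isD2 (f x) = isD2 x.
Proof. by rewrite /isD2 isCD_f isD13_f isC_f. Qed.

Lemma fD1 : f (GD i1) = GD i1.
Proof.
have := isD2_f (GD i1); rewrite !isD2E /=.
case: (f (GD i1)) => // i; move: i; apply: ord3P => //.
Qed.

Lemma fD2 : f (GD i2) = GD i2.
Proof.
have := isD13_f (GD i2); have := Hadj (GD i2) (GD i1); rewrite fD1 !isD13E /=.
case: (f (GD i2)) => // i; move: i; apply: ord3P => //.
Qed.

Lemma fD0 : f (GD i0) = GD i0.
Proof.
have := isD13_f (GD i0); have := Hadj (GD i0) (GD i1); rewrite fD1 !isD13E /=.
case: (f (GD i0)) => // i; move: i; apply: ord3P => //.
Qed.

Lemma fB0 : f (GB i0) = GB i0.
Proof.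
have := isB_f (GB i0); have := Hadj (GB i0) (GD i0); rewrite fD0 !isBE /=.
case: (f (GB i0)) => // i; move: i; apply: ord3P => //.
Qed.

Lemma fB2 : f (GB i2) = GB i2.
Proof.
have := isB_f (GB i2); have := Hadj (GB i2) (GD i2); rewrite fD2 !isBE /=.
case: (f (GB i2)) => // i; move: i; apply: ord3P => //.
Qed.

Lemma fB1 : f (GB i1) = GB i1.
Proof.
have := isB_f (GB i1); have := Hadj (GB i1) (GD i2); have := Hadj (GB i1) (GD i0).
rewrite fD2 fD0 !isBE /=.
case: (f (GB i1)) => // i; move: i; apply: ord3P => //.
Qed.

Lemma fB i : f (GB i) = GB i.
Proof. by move: i; apply: ord3P; [exact: fB0 | exact: fB1 | exact: fB2]. Qed.

Lemma fA i : f (GA i) = GA i.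
Proof.
have := isA_f (GA i); have := Hadj (GA i) (GB i); rewrite fB !isAE /gadj /= eqxx /=.
by case: (f (GA i)) => // j /= /eqP ->.
Qed.

Lemma modSE l : l < n -> l.+1 %% n = (if l.+1 < n then l.+1 else 0).
Proof.
move=> Hl; case: ifP => H; first by rewrite modn_small.
have -> : l.+1 = n by apply/eqP; rewrite eqn_leq Hl leqNgt H.
by rewrite modnn.
Qed.

Lemma adjCV j k : adj (GC j) (GV k) = (nat_of_ord k == nat_of_ord j) || (nat_of_ord k == (nat_of_ord j).+1 %% n).
Proof. by rewrite /gadj /= orbF. Qed.
Lemma adjVC j k : adj (GV k) (GC j) = (nat_of_ord k == nat_of_ord j) || (nat_of_ord k == (nat_of_ord j).+1 %% n).
Proof. by rewrite /gadj /=. Qed.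

Lemma fV0 : f (GV n0) = GV n0.
Proof.
have := isV_f (GV n0); have := Hadj (GV n0) (GD i0); rewrite fD0 !isVE /gadj /=.
by case: (f (GV n0)) => // k /=; rewrite orbF => /eqP H _; congr GV; exact: val_inj.
Qed.

Lemma fV1 : f (GV n1) = GV n1.
Proof.
have := isV_f (GV n1); have := Hadj (GV n1) (GD i1); rewrite fD1 !isVE /gadj /=.
by case: (f (GV n1)) => // k /=; rewrite orbF => /eqP H _; congr GV; exact: val_inj.
Qed.

Lemma fC0 : f (GC n0) = GC n0.
Proof.
have := isC_f (GC n0); have := Hadj (GC n0) (GV n0); have := Hadj (GC n0) (GV n1).
rewrite fV0 fV1 !isCE !adjCV /=.
case: (f (GC n0)) => // l; rewrite !adjCV /= (modSE (ltn_ord l)) (@modn_small 1 n) // => H1 H0 _.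
congr GC; apply: ord_inj => /=; move: H1 H0 (ltn_ord l); case: ifP => Hc; lia.
Qed.

Lemma fCV k : k < n -> (forall i : 'I_n, nat_of_ord i <= k -> f (GC i) = GC i) /\
  (forall i : 'I_n, nat_of_ord i <= k.+1 -> f (GV i) = GV i).
Proof.
elim: k => [_|k IH Hk].
  split => i Hi.
    have -> : i = n0 by apply: ord_inj => /=; lia.
    exact: fC0.
  have : nat_of_ord i = 0 \/ nat_of_ord i = 1 by lia.
  by case=> Ei; [have -> : i = n0 | have -> : i = n1]; rewrite ?fV0 ?fV1 //; apply: ord_inj.
have [IHC IHV] := IH (ltnW Hk).
have fCk : forall i : 'I_n, nat_of_ord i = k.+1 -> f (GC i) = GC i.
  move=> i Ei.
  have Hk' : k < n by lia.
  have := isC_f (GC i); have := Hadj (GC i) (GV i).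
  rewrite (IHV i) ?Ei // !isCE adjCV eqxx /=.
  case E: (f (GC i)) => [||| l |] // H _.
  have Hne : l != Ordinal Hk'.
    apply/eqP => El; subst l.
    have : f (GC i) = f (GC (Ordinal Hk')) by rewrite E IHC.
    by move/finj => [] /(congr1 (@nat_of_ord _)) /=; lia.
  congr GC; apply: ord_inj; move: H Hne; rewrite adjCV (modSE (ltn_ord l)).
  move=> H Hne; apply/eqP; move: H; rewrite Ei.
  have Hv : nat_of_ord l != k by apply: contra Hne => /eqP Hl; apply/eqP; apply: val_inj.
  move: Hv; case: ifP => _; lia.
split => i Hi.
  have : nat_of_ord i <= k \/ nat_of_ord i = k.+1 by lia.
  by case=> [/IHC|/fCk].
have : nat_of_ord i <= k.+1 \/ nat_of_ord i = k.+2 by lia.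
case=> [/IHV //|Ei].
have Hk1 : k.+1 < n by lia.
set c := Ordinal Hk1.
have := isV_f (GV i); have := Hadj (GV i) (GC c).
rewrite fCk // !isVE adjVC /= Ei (modSE Hk1).
rewrite (_ : k.+2 < n) /= ?eqxx ?orbT; last by move: (ltn_ord i); rewrite Ei.
case E: (f (GV i)) => [l ||||] // H _.
have Hne : nat_of_ord l != k.+1.
  apply/eqP => El.
  have : f (GV i) = f (GV c) by rewrite E IHV /= //; congr GV; apply: val_inj.
  by move/finj => [] /(congr1 (@nat_of_ord _)) /=; lia.
congr GV; apply: val_inj; move: H Hne; rewrite adjVC /= (modSE Hk1) /=.
rewrite (_ : k.+2 < n) ?Ei; last by move: (ltn_ord i); rewrite Ei.
lia.
Qed.

Lemma f_id x : f x = x.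
Proof.
case: x => i.
- by apply: (proj2 (fCV (ltnSn m.+2))); move: (ltn_ord i); lia.
- exact: fA.
- exact: fB.
- by apply: (proj1 (fCV (ltnSn m.+2))); move: (ltn_ord i); lia.
- by move: i; apply: ord3P; [exact: fD0 | exact: fD1 | exact: fD2].
Qed.
End Main.

Theorem lemma3p8 (n : nat) (e : rel 'I_n) :
  3 <= n -> irreflexive e -> symmetric e ->
  forall f : gvert n -> gvert n, is_graph_aut (gadj e) f -> forall x, f x = x.
Proof.
case: n e => [|[|[|m]]] e // _ _ _ f [[g fK gK] Hadj] x.
exact: (f_id fK gK Hadj).
Qed.
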